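(* Assume $V$ is positive definite with smallest eigenvalue $\lambda$, and that $i_n$, $n\ge0$, are i.i.d. uniformly distributed on $\{1,\dots,d\}$. Then for every $j\ge0$, $$E(\|M_j\|^2)\le d^2\,(1-\lambda d^{-1})^j.$$
   Context: Let $d\ge1$ and let $V$ be a real symmetric $d\times d$ matrix whose diagonal entries all equal $1$. Write $\sqrt V$ for its symmetric positive semi-definite square root and $I$ for the $d\times d$ identity. Let $e_i$ be the $i$-th standard basis column vector of $\mathbb R^d$. For $1\le i\le d$ let $f_i=\sqrt V e_i$ and $P_i=I-f_if_i^T$. For $j\ge0$ let $M_j=P_{i_{j-1}}P_{i_{j-2}}\cdots P_{i_0}$, with $M_0=I$. For a $d\times d$ matrix $A$, $\|A\|=\sqrt{\operatorname{tr}(A^TVA)}$. *)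

(* Defs.v *)
From HB Require Import structures.
From mathcomp Require Import all_boot all_order all_algebra.
Set Implicit Arguments. Unset Strict Implicit. Unset Printing Implicit Defensive.
Import Order.TTheory GRing.Theory Num.Theory.
Local Open Scope ring_scope.

Section Defs.
Variables (R : rcfType) (d : nat).

Definition qform (A : 'M[R]_d) (x : 'cV[R]_d) : R := (x^T *m A *m x) 0 0.

Definition symmetric_mx (A : 'M[R]_d) : Prop := A^T = A.

Definition psd_mx (A : 'M[R]_d) : Prop :=
  symmetric_mx A /\ forall x : 'cV[R]_d, 0 <= qform A x.

Definition pd_mx (A : 'M[R]_d) : Prop :=
  symmetric_mx A /\ forall x : 'cV[R]_d, x != 0 -> 0 < qform A x.

Definition is_psd_sqrt (S V : 'M[R]_d) : Prop := psd_mx S /\ S *m S = V.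

Definition smallest_eigenvalue (V : 'M[R]_d) (lam : R) : Prop :=
  eigenvalue V lam /\ forall mu, eigenvalue V mu -> lam <= mu.

Definition e_vec (i : 'I_d) : 'cV[R]_d := delta_mx i 0.
Definition f_vec (S : 'M[R]_d) (i : 'I_d) : 'cV[R]_d := S *m e_vec i.
Definition P_mx (S : 'M[R]_d) (i : 'I_d) : 'M[R]_d :=
  1%:M - f_vec S i *m (f_vec S i)^T.

(* M_j = P_{i_{j-1}} ... P_{i_0}, for s = [:: i_0; ...; i_{j-1}] *)
Definition M_mx (S : 'M[R]_d) (s : seq 'I_d) : 'M[R]_d :=
  foldl (fun M i => P_mx S i *m M) 1%:M s.

Definition Vnorm (V A : 'M[R]_d) : R := Num.sqrt (\tr (A^T *m V *m A)).

(* E(||M_j||^2) for i_0, ..., i_{j-1} i.i.d. uniform on {1..d}: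
   uniform average over all j-tuples of indices *)
Definition expect_norm2 (S V : 'M[R]_d) (j : nat) : R :=
  (d%:R ^+ j)^-1 * \sum_(t : j.-tuple 'I_d) Vnorm V (M_mx S t) ^+ 2.

End Defs.

(* Main.v *)
Require Import Defs.
From mathcomp Require Import all_boot all_order all_algebra.
From mathcomp Require Import spectral sesquilinear complex.
Import Order.TTheory GRing.Theory Num.Theory.
Local Open Scope ring_scope.
Set Implicit Arguments. Unset Strict Implicit. Unset Printing Implicit Defensive.

Lemma foldl_M (R : rcfType) d (S : 'M[R]_d) s (A : 'M[R]_d) :
  foldl (fun M i => P_mx S i *m M) A s = M_mx S s *m A.
Proof.
elim: s A => [|i s IH] A /=; first by rewrite /M_mx /= mul1mx.
by rewrite /M_mx /= IH (IH (P_mx S i *m 1%:M)) mulmx1 mulmxA.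
Qed.

Lemma M_cons (R : rcfType) d (S : 'M[R]_d) i s :
  M_mx S (i :: s) = M_mx S s *m P_mx S i.
Proof. by rewrite {1}/M_mx /= foldl_M mulmx1. Qed.

Lemma sum_tuple_cons (R : rcfType) d j (F : j.+1.-tuple 'I_d -> R) :
  \sum_(t : j.+1.-tuple 'I_d) F t =
  \sum_(i : 'I_d) \sum_(t : j.-tuple 'I_d) F [tuple of i :: t].
Proof.
rewrite pair_big /=.
rewrite (reindex (fun p : 'I_d * j.-tuple 'I_d => [tuple of p.1 :: p.2])) //=.
apply: onW_bij.
exists (fun t : j.+1.-tuple 'I_d => (thead t, [tuple of behead t])).
  by case=> i t /=; rewrite theadE; congr pair; apply: val_inj.
by move=> t /=; rewrite [in RHS](tuple_eta t).
Qed.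

Lemma P_sym (R : rcfType) d (S : 'M[R]_d) i : (P_mx S i)^T = P_mx S i.
Proof. by rewrite /P_mx raddfB /= trmx1 trmx_mul trmxK. Qed.

Lemma ff1 (R : rcfType) d (S V : 'M[R]_d) i :
  S^T = S -> S *m S = V -> V i i = 1 ->
  (f_vec S i)^T *m f_vec S i = 1%:M.
Proof.
move=> St SS Vii; rewrite /f_vec trmx_mul St mulmxA -(mulmxA _ S S) SS.
apply/matrixP => a b; rewrite !ord1 !mxE.
rewrite (bigD1 i) //= big1 ?addr0; last first.
  by move=> k /negbTE ki; rewrite !mxE ki mulr0.
rewrite !mxE eqxx mulr1 (bigD1 i) //= big1 ?addr0; last first.
  by move=> k /negbTE ki; rewrite !mxE ki mul0r.
by rewrite !mxE eqxx mul1r Vii.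
Qed.

Lemma PP (R : rcfType) d (S V : 'M[R]_d) i :
  S^T = S -> S *m S = V -> V i i = 1 ->
  P_mx S i *m P_mx S i = P_mx S i.
Proof.
move=> St SS Vii; rewrite /P_mx.
set f := f_vec S i.
have FF : f *m f^T *m (f *m f^T) = f *m f^T.
  by rewrite mulmxA -(mulmxA f) (ff1 St SS Vii) mulmx1.
rewrite mulmxBl mulmxBr !mul1mx mulmxBr mulmx1 FF. rewrite subrr subr0 //.
Qed.

Lemma sum_ee (R : rcfType) d :
  \sum_(i < d) (e_vec R i *m (e_vec R i)^T) = 1%:M.
Proof.
apply/matrixP => a b; rewrite summxE !mxE.
rewrite (bigD1 a) //= big1 ?addr0; last first.
  by move=> k ka; rewrite !mxE big_ord1 !mxE eq_sym (negbTE ka) mul0r.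
rewrite !mxE big_ord1 !mxE eqxx /= mul1r [b == a]eq_sym.
by case: (a == b).
Qed.

Lemma g_step (R : rcfType) d (S V : 'M[R]_d) i (A : 'M[R]_d) :
  S^T = S -> S *m S = V -> V i i = 1 ->
  \tr ((A *m P_mx S i)^T *m V *m (A *m P_mx S i)) =
  \tr (A^T *m V *m A) - \tr (A^T *m V *m A *m (f_vec S i *m (f_vec S i)^T)).
Proof.
move=> St SS Vii; set B := A^T *m V *m A.
rewrite trmx_mul P_sym.
have -> : P_mx S i *m A^T *m V *m (A *m P_mx S i) = P_mx S i *m (B *m P_mx S i).
  by rewrite /B !mulmxA.
rewrite mxtrace_mulC -mulmxA (PP St SS Vii) /P_mx mulmxBr mulmx1.
by rewrite raddfB.
Qed.

Lemma sum_trF (R : rcfType) d (S V : 'M[R]_d) (B : 'M[R]_d) :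
  S^T = S -> S *m S = V ->
  \sum_i \tr (B *m (f_vec S i *m (f_vec S i)^T)) = \tr (B *m V).
Proof.
move=> St SS; rewrite -raddf_sum /=; congr (\tr _).
have -> : V = S *m (\sum_(i < d) (e_vec R i *m (e_vec R i)^T)) *m S.
  by rewrite sum_ee mulmx1.
rewrite mulmx_sumr mulmx_suml mulmx_sumr.
by apply: eq_bigr => i _; rewrite /f_vec trmx_mul St !mulmxA.
Qed.

Lemma row_quad (R : rcfType) d (X Y : 'M[R]_d) k :
  (X *m Y *m X^T) k k = (row k X *m Y *m (row k X)^T) 0 0.
Proof.
rewrite !mxE; apply: eq_bigr => l _; rewrite !mxE; congr (_ * _).
by apply: eq_bigr => m _; rewrite !mxE.
Qed.

Lemma tr_NtN_ge0 (R : rcfType) d (N : 'M[R]_d) : 0 <= \tr (N^T *m N).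
Proof.
rewrite /mxtrace; apply: sumr_ge0 => k _; rewrite !mxE; apply: sumr_ge0 => l _.
by rewrite !mxE -expr2 sqr_ge0.
Qed.

Lemma g_ge0 (R : rcfType) d (S V A : 'M[R]_d) :
  S^T = S -> S *m S = V -> 0 <= \tr (A^T *m V *m A).
Proof.
move=> St SS; rewrite -SS.
have -> : A^T *m (S *m S) *m A = (S *m A)^T *m (S *m A).
  by rewrite trmx_mul St !mulmxA.
exact: tr_NtN_ge0.
Qed.

Lemma trBV (R : rcfType) d (S V A : 'M[R]_d) lam :
  (forall x : 'rV[R]_d, lam * (x *m x^T) 0 0 <= (x *m V *m x^T) 0 0) ->
  S^T = S -> S *m S = V ->
  lam * \tr (A^T *m V *m A) <= \tr (A^T *m V *m A *m V).
Proof.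
move=> K St SS; set N := S *m A.
have -> : A^T *m V *m A = N^T *m N by rewrite /N -SS trmx_mul St !mulmxA.
have -> : \tr (N^T *m N) = \tr (N *m 1%:M *m N^T) by rewrite mulmx1 mxtrace_mulC.
have -> : \tr (N^T *m N *m V) = \tr (N *m V *m N^T).
  by rewrite -mulmxA mxtrace_mulC.
rewrite /mxtrace mulr_sumr; apply: ler_sum => k _.
by rewrite !row_quad mulmx1.
Qed.

Lemma step_sum (R : rcfType) d (S V A : 'M[R]_d) lam :
  (forall x : 'rV[R]_d, lam * (x *m x^T) 0 0 <= (x *m V *m x^T) 0 0) ->
  S^T = S -> S *m S = V -> (forall i, V i i = 1) ->
  \sum_i \tr ((A *m P_mx S i)^T *m V *m (A *m P_mx S i))
    <= (d%:R - lam) * \tr (A^T *m V *m A).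
Proof.
move=> K St SS Vii.
rewrite (eq_bigr _ (fun i _ => g_step A St SS (Vii i))) sumrB (sum_trF _ St SS).
rewrite sumr_const card_ord mulrBl mulr_natl lerD2l lerN2.
exact: (trBV A K St SS).
Qed.

Lemma T_bound (R : rcfType) d (S V : 'M[R]_d) lam :
  (0 < d)%N ->
  (forall x : 'rV[R]_d, lam * (x *m x^T) 0 0 <= (x *m V *m x^T) 0 0) ->
  S^T = S -> S *m S = V -> (forall i, V i i = 1) ->
  0 <= d%:R - lam /\
  forall j, \sum_(t : j.-tuple 'I_d) \tr ((M_mx S t)^T *m V *m M_mx S t)
    <= d%:R * (d%:R - lam) ^+ j.
Proof.
move=> d0 K St SS Vii.
set T := fun j => \sum_(t : j.-tuple 'I_d) \tr ((M_mx S t)^T *m V *m M_mx S t).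
have T0 : T 0%N = d%:R.
  rewrite /T (eq_bigr (fun=> \tr ((M_mx S [tuple])^T *m V *m M_mx S [tuple]))); last first.
    by move=> t _; rewrite tuple0.
  rewrite sumr_const card_tuple expn0 /M_mx /= trmx1 mul1mx mulmx1.
  rewrite /mxtrace (eq_bigr (fun=> 1)) // sumr_const card_ord.
  by rewrite [in LHS]/GRing.natmul /=.
have TS : forall j, T j.+1 <= (d%:R - lam) * T j.
  move=> j; rewrite /T sum_tuple_cons exchange_big /= mulr_sumr.
  apply: ler_sum => t _.
  under eq_bigr => i _ do rewrite M_cons.
  exact: step_sum.
have c0 : 0 <= d%:R - lam.
  have H := TS 0%N; rewrite T0 in H.
  have H1 : 0 <= T 1%N by apply: sumr_ge0 => t _; apply: g_ge0 St SS.
  have := le_trans H1 H; rewrite pmulr_lge0 // ltr0n //.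
split => // j; suff : T j <= d%:R * (d%:R - lam) ^+ j by [].
elim: j => [|j IH]; first by rewrite T0 expr0 mulr1.
apply: (le_trans (TS j)); rewrite exprS mulrCA.
exact: ler_wpM2l.
Qed.

Section K.
Variable R : rcfType.
Local Notation C := (R[i]).
Local Notation toC := (real_complex R).

Lemma toC_real (k : R) : (toC k : C) \is Num.real.
Proof.
rewrite realE; apply/orP; case/orP: (le_total 0 k) => h; [left|right].
  by rewrite -(rmorph0 toC) lecR.
by rewrite -(rmorph0 toC) lecR.
Qed.

Lemma conj_toC m n (A : 'M[R]_(m, n)) :
  map_mx Num.conj (map_mx toC A) = map_mx toC A.
Proof. by apply/matrixP => i j; rewrite !mxE conj_Creal // toC_real. Qed.

Lemma real_eq (z : C) : z \is Num.real -> z = toC (@complex.Re R z).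
Proof.
case: z => a b; rewrite realE => /orP[]; rewrite lecE /= => /andP[/eqP hb _]; by rewrite ?hb // -hb.
Qed.

Local Open Scope sesquilinear_scope.

Lemma Klem d (V : 'M[R]_d) lam :
  symmetric_mx V -> smallest_eigenvalue V lam ->
  forall x : 'rV[R]_d, lam * (x *m x^T) 0 0 <= (x *m V *m x^T) 0 0.
Proof.
move=> Vs [_ Hmin] x.
set Vc := map_mx toC V.
have Vh : Vc \is hermsymmx.
  apply: realsym_hermsym.
    apply/is_hermitianmxP; rewrite expr0 scale1r map_mx_id // /Vc map_trmx.
    by rewrite (_ : V^T = V).
  by apply/mxOverP => i j; rewrite mxE toC_real.
have /orthomx_spectralP Veq := hermitian_normalmx Vh.
have Pu : spectralmx Vc \is unitarymx := spectral_unitarymx Vc.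
have Dr := hermitian_spectral_diag_real Vh.
move: Veq Pu Dr; set P := spectralmx Vc; set D := spectral_diag Vc => Veq Pu Dr.
rewrite invmx_unitary // in Veq.
have Dge : forall k, toC lam <= D 0 k.
  move=> k; have Dkr : D 0 k \is Num.real by move/mxOverP: Dr; apply.
  have PV : P *m Vc = diag_mx D *m P.
    by rewrite {1}Veq !mulmxA (unitarymxP Pu) mul1mx.
  have ev : eigenvalue Vc (D 0 k).
    apply/eigenvalueP; exists (row k P).
      by rewrite -row_mul PV row_mul row_diag_mx -scalemxAl -rowE.
    apply/negP => /eqP h0.
    have := unitarymxP Pu; move/matrixP/(_ k k); rewrite !mxE eqxx /=.
    rewrite big1 => [/eqP|l _]; first by rewrite eq_sym oner_eq0.
    have : row k P 0 l = 0 by rewrite h0 mxE.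
    by rewrite mxE => ->; rewrite mul0r.
  rewrite (real_eq Dkr) lecR; apply: Hmin.
  rewrite eigenvalue_root_char -(fmorph_root toC) map_char_poly.
  rewrite -eigenvalue_root_char; move: ev; rewrite {1}(real_eq Dkr); exact.
set xc := map_mx toC x.
have e1 : forall A : 'M[R]_(1, 1), toC (A 0 0) = (map_mx toC A) 0 0.
  by move=> A; rewrite mxE.
have Hx : map_mx toC x^T = xc ^t*.
  by rewrite /xc map_trmx conj_toC.
rewrite -lecR rmorphM /= !e1 !map_mxM -/Vc -/xc Hx Veq.
set y := xc *m P^t*.
have Hy : P *m xc^t* = y^t*.
  rewrite /y trmx_mul map_mxM; congr (_ *m _); apply/matrixP => i j; rewrite !mxE; exact/esym/conjCK.
have -> : xc *m (P ^t* *m diag_mx D *m P) *m xc^t* = y *m diag_mx D *m y^t*.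
  by rewrite -Hy /y !mulmxA.
have -> : xc *m xc^t* = y *m y^t*.
  by rewrite -Hy /y mulmxA mulmxKtV.
rewrite !mxE mulr_sumr; apply: ler_sum => k _.
rewrite mul_mx_diag !mxE mulrAC [_ * D 0 k]mulrC.
by apply: ler_wpM2r; [exact: mul_conjC_ge0 | exact: Dge].
Qed.
End K.

Theorem lemma5p1 (R : rcfType) (d : nat) (V S : 'M[R]_d) (lam : R) :
  (0 < d)%N ->
  symmetric_mx V ->
  (forall i : 'I_d, V i i = 1) ->
  is_psd_sqrt S V ->
  pd_mx V ->
  smallest_eigenvalue V lam ->
  forall j : nat,
    expect_norm2 S V j <= d%:R ^+ 2 * (1 - lam / d%:R) ^+ j.
Proof.
move=> d0 Vs Vii [[St _] SS] _ Hl j.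
have K := Klem Vs Hl.
have [c0 Tb] := T_bound d0 K St SS Vii.
have dn0 : d%:R != 0 :> R by rewrite pnatr_eq0 -lt0n.
have dp : 0 < d%:R :> R by rewrite ltr0n.
rewrite /expect_norm2.
under eq_bigr => t _ do rewrite /Vnorm sqr_sqrtr ?(g_ge0 _ St SS) //.
have -> : 1 - lam / d%:R = (d%:R - lam) / d%:R by rewrite mulrBl divff.
have c1 : 0 <= (d%:R - lam) / d%:R by rewrite divr_ge0 // ltW.
apply: (le_trans (ler_wpM2l _ (Tb j))); first by rewrite invr_ge0 exprn_ge0 // ltW.
rewrite mulrCA expr_div_n [_^-1 * _]mulrC expr2 -mulrA.
apply: ler_wpM2l; first exact: ltW.
apply: ler_peMl; last by rewrite ler1n.
by rewrite -expr_div_n exprn_ge0.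
Qed.
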